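(* Let $\mathscr{H}$ be a complex Hilbert space, $N(\cdot)$ a norm on $\mathbb{B}(\mathscr{H})$, and $B,C\in\mathbb{B}(\mathscr{H})$. Then: (a) $w_{(N,e)}(B,C)=\frac{1}{\sqrt2}\,w_{(N,e)}(B+C,B-C)$; (b) $w_{(N,e)}(\Re B,\Im B)=\frac{1}{\sqrt2}\,w_{(N,e)}(B,B^* )=w_N(B)$; (c) $w_{(N,e)}(B,B)=\sqrt2\, w_N(B)$; (d) $w_{(N,e)}(B^*,C^* )=w_{(N,e)}(B,C)$; (e) if $N$ is weakly unitarily invariant, i.e. $N(U^*TU)=N(T)$ for all $T\in\mathbb{B}(\mathscr{H})$ and all unitary $U\in\mathbb{B}(\mathscr{H})$, then $w_{(N,e)}(U^*BU,U^*CU)=w_{(N,e)}(B,C)$ for every unitary $U\in\mathbb{B}(\mathscr{H})$; (f) $$w_{(N,e)}(B,C)=\sup_{|\lambda_1|^2+|\lambda_2|^2\leq1}\ \sup_{\alpha,\beta\in\mathbb{R},\ \alpha^2+\beta^2=1} N\big(\alpha\Re(\lambda_1B+\lambda_2C)+\beta\Im(\lambda_1B+\lambda_2C)\big),$$ where $\lambda_1,\lambda_2$ range over $\mathbb{C}$.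
   Context: For $T\in\mathbb{B}(\mathscr{H})$: $\Re(T)=\frac12(T+T^* )$, $\Im(T)=\frac{1}{2i}(T-T^* )$, and $w_N(T)=\sup_{\theta\in\mathbb{R}}N(\Re(e^{i\theta}T))$. For $B,C\in\mathbb{B}(\mathscr{H})$, $w_{(N,e)}(B,C)=\sup_{\lambda_1,\lambda_2\in\mathbb{C},\ |\lambda_1|^2+|\lambda_2|^2\leq 1}\sup_{\theta\in\mathbb{R}} N(\Re(e^{i\theta}(\lambda_1B+\lambda_2C)))$. *)

(* Defs.v *)
From HB Require Import structures.
From mathcomp Require Import all_boot all_order all_algebra.
From mathcomp Require Import all_classical all_reals.
From mathcomp Require Import ereal trigo.
From mathcomp Require Import complex.
From Stdlib Require Import ClassicalEpsilon.
Set Implicit Arguments. Unset Strict Implicit. Unset Printing Implicit Defensive.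
Import Order.TTheory GRing.Theory Num.Theory.
Local Open Scope ring_scope.

Section HilbertDefs.
Variables (R : realType) (V : lmodType R[i]) (ip : V -> V -> R[i]).

Definition is_inner_product : Prop :=
  [/\ forall a x y z, ip (a *: x + y) z = a * ip x z + ip y z,
      forall x y, ip y x = conjc (ip x y),
      forall x, 0 <= ip x x
    & forall x, ip x x = 0 -> x = 0].

Definition hnorm (x : V) : R := Num.sqrt (complex.Re (ip x x)).

Definition ip_complete : Prop :=
  forall u : nat -> V,
    (forall e : R, 0 < e -> exists n0, forall m n, (n0 <= m)%N -> (n0 <= n)%N ->
        hnorm (u m - u n) < e) ->
    exists l : V, forall e : R, 0 < e -> exists n0, forall n, (n0 <= n)%N ->
        hnorm (u n - l) < e.

Definition hilbert : Prop := is_inner_product /\ ip_complete.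

Definition bounded_op (T : V -> V) : Prop :=
  (forall (a : R[i]) x y, T (a *: x + y) = a *: T x + T y) /\
  exists M : R, forall x, hnorm (T x) <= M * hnorm x.

Definition zero_op : V -> V := fun _ => 0.
Definition add_op (S T : V -> V) : V -> V := fun x => S x + T x.
Definition scale_op (c : R[i]) (T : V -> V) : V -> V := fun x => c *: T x.
Definition comp_op (S T : V -> V) : V -> V := fun x => S (T x).

Definition adj (T : V -> V) : V -> V :=
  epsilon (inhabits zero_op) (fun S => forall x y, ip (T x) y = ip x (S y)).

Definition unitary (U : V -> V) : Prop :=
  bounded_op U /\ comp_op (adj U) U = id /\ comp_op U (adj U) = id.

Definition re_op (T : V -> V) : V -> V :=
  scale_op (2^-1) (add_op T (adj T)).
Definition im_op (T : V -> V) : V -> V :=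
  scale_op ((2 * Complex 0 1)^-1) (add_op T (scale_op (-1) (adj T))).

Definition op_norm (N : (V -> V) -> R) : Prop :=
  [/\ forall T, bounded_op T -> 0 <= N T,
      forall T, bounded_op T -> N T = 0 -> T = zero_op,
      forall c T, bounded_op T -> N (scale_op c T) = ComplexField.Normc.normc c * N T
    & forall S T, bounded_op S -> bounded_op T -> N (add_op S T) <= N S + N T].

Definition weakly_unitarily_invariant (N : (V -> V) -> R) : Prop :=
  forall T U, bounded_op T -> unitary U -> N (comp_op (adj U) (comp_op T U)) = N T.

Definition expi (t : R) : R[i] := (cos t +i* sin t)%C.

Definition wN (N : (V -> V) -> R) (T : V -> V) : \bar R :=
  ereal_sup [set ((N (re_op (scale_op (expi t) T)))%:E)%E | t in [set: R]].

Definition unit_pair (l1 l2 : R[i]) : Prop :=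
  ComplexField.Normc.normc l1 ^+ 2 + ComplexField.Normc.normc l2 ^+ 2 <= 1.

Definition wNe (N : (V -> V) -> R) (B C : V -> V) : \bar R :=
  ereal_sup [set x : \bar R | exists (l1 l2 : R[i]) (t : R),
      unit_pair l1 l2 /\
      x = ((N (re_op (scale_op (expi t)
               (add_op (scale_op l1 B) (scale_op l2 C)))))%:E)%E].

End HilbertDefs.

(* Main.v *)
Require Import Defs.
From HB Require Import structures.
From mathcomp Require Import all_boot all_order all_algebra.
From mathcomp Require Import all_classical all_reals.
From mathcomp Require Import ereal trigo.
From mathcomp Require Import complex.
From mathcomp Require Import ring lra.
From Stdlib Require Import ClassicalEpsilon.
Import Order.TTheory GRing.Theory Num.Theory.
Local Open Scope ring_scope.
Local Open Scope complex_scope.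
Section Basics.
Variables (R : realType) (V : lmodType R[i]) (ip : V -> V -> R[i]).
Hypothesis Hip : is_inner_product ip.

Lemma conjD (a b : R[i]) : conjc (a + b) = conjc a + conjc b.
Proof. by case: a; case: b => ? ? ? ? /=; simpc. Qed.
Lemma conjM (a b : R[i]) : conjc (a * b) = conjc a * conjc b.
Proof. by case: a; case: b => ? ? ? ? /=; simpc; apply/eqP; rewrite eq_complex /=; apply/andP; split; apply/eqP; ring. Qed.
Lemma conjN (a : R[i]) : conjc (- a) = - conjc a.
Proof. by case: a => ? ? /=; simpc. Qed.
Lemma conjK (a : R[i]) : conjc (conjc a) = a.
Proof. by case: a => ? ? /=; rewrite opprK. Qed.
Lemma conjR (r : R) : conjc (r%:C) = r%:C.
Proof. by rewrite /= oppr0. Qed.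

Lemma ipDZl a x y z : ip (a *: x + y) z = a * ip x z + ip y z.
Proof. by case: Hip => H _ _ _; apply: H. Qed.
Lemma ipC x y : ip y x = conjc (ip x y).
Proof. by case: Hip => _ H _ _; apply: H. Qed.
Lemma ip_ge0 x : 0 <= ip x x.
Proof. by case: Hip => _ _ H _; apply: H. Qed.
Lemma ip_eq0 x : ip x x = 0 -> x = 0.
Proof. by case: Hip => _ _ _ H; apply: H. Qed.

Lemma ip0l z : ip 0 z = 0.
Proof.
have := ipDZl 1 0 0 z; rewrite scaler0 addr0 mul1r => H.
by apply: (addrI (ip 0 z)); rewrite addr0 -H.
Qed.
Lemma ipDl x y z : ip (x + y) z = ip x z + ip y z.
Proof. by rewrite -[x]scale1r ipDZl mul1r scale1r. Qed.
Lemma ipZl a x z : ip (a *: x) z = a * ip x z.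
Proof. by rewrite -[a *: x]addr0 ipDZl ip0l addr0. Qed.
Lemma ipNl x z : ip (- x) z = - ip x z.
Proof. by rewrite -scaleN1r ipZl mulN1r. Qed.
Lemma ipBl x y z : ip (x - y) z = ip x z - ip y z.
Proof. by rewrite ipDl ipNl. Qed.
Lemma ip0r z : ip z 0 = 0.
Proof. by rewrite ipC ip0l conjc0. Qed.
Lemma ipDr x y z : ip x (y + z) = ip x y + ip x z.
Proof. by rewrite ipC ipDl conjD -!ipC. Qed.
Lemma ipZr a x z : ip x (a *: z) = conjc a * ip x z.
Proof. by rewrite ipC ipZl conjM -!ipC. Qed.
Lemma ipNr x z : ip x (- z) = - ip x z.
Proof. by rewrite ipC ipNl conjN -!ipC. Qed.
Lemma ipBr x y z : ip x (y - z) = ip x y - ip x z.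
Proof. by rewrite ipDr ipNr. Qed.

Local Notation nsq x := (complex.Re (ip x x)).

Lemma ipxx x : ip x x = (nsq x)%:C.
Proof.
have := ger0_Im (ip_ge0 x); case: (ip x x) => a b /= ->; by [].
Qed.
Lemma nsq_ge0 x : 0 <= nsq x.
Proof. by have := ip_ge0 x; rewrite lecE => /andP[]. Qed.
Lemma nsq_eq0 x : nsq x = 0 -> x = 0.
Proof. by move=> H; apply: ip_eq0; rewrite ipxx H. Qed.

Lemma normc2 (z : R[i]) : ComplexField.Normc.normc z ^+ 2 = complex.Re z ^+ 2 + complex.Im z ^+ 2.
Proof. by case: z => a b /=; rewrite sqr_sqrtr // addr_ge0 // sqr_ge0. Qed.

Lemma normc_ge0 (z : R[i]) : 0 <= ComplexField.Normc.normc z.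
Proof. by case: z => a b /=; rewrite sqrtr_ge0. Qed.

Lemma hnorm2 x : hnorm ip x ^+ 2 = nsq x.
Proof. by rewrite /hnorm sqr_sqrtr // nsq_ge0. Qed.
Lemma hnorm_ge0 x : 0 <= hnorm ip x.
Proof. by rewrite /hnorm sqrtr_ge0. Qed.

Lemma CS x y : ComplexField.Normc.normc (ip x y) <= hnorm ip x * hnorm ip y.
Proof.
have [y0|ny0] := eqVneq (nsq y) 0.
  by rewrite (nsq_eq0 _ y0) ip0r ComplexField.Normc.normc0 mulr_ge0 // hnorm_ge0.
have n0 : 0 < nsq y by rewrite lt0r ny0 nsq_ge0.
rewrite /hnorm -sqrtrM ?nsq_ge0 //.
case E: (ip x y) => [a b] /=; rewrite ler_sqrt; last by rewrite mulr_ge0 // nsq_ge0.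
set m := nsq x; set n := nsq y.
pose c : R[i] := (a / n) +i* (b / n).
have := nsq_ge0 (x - c *: y).
rewrite ipBl !ipBr !ipZl !ipZr (ipC x y) E (ipxx x) (ipxx y) -/m -/n.
rewrite /c; simpc => /=.
set e := (X in 0 <= X -> _).
have -> : e = (m * n - (a^+2 + b^+2)) / n by rewrite /e; field; rewrite gt_eqF.
by rewrite pmulr_lge0 ?invr_gt0 // subr_ge0.
Qed.

Lemma cplx_eq (a b c d : R) : a = c -> b = d -> a +i* b = c +i* d.
Proof. by move=> -> ->. Qed.

Lemma nsqD x y : nsq (x + y) = nsq x + nsq y + 2 * complex.Re (ip x y).
Proof.
rewrite ipDl !ipDr (ipC x y) (ipxx x) (ipxx y).
by case: (ip x y) => a b /=; simpc => /=; ring.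
Qed.

Lemma Re_le_normc (z : R[i]) : complex.Re z <= ComplexField.Normc.normc z.
Proof.
case: z => a b /=; apply: (le_trans (ler_norm a)).
by rewrite -sqrtr_sqr ler_sqrt ?addr_ge0 ?sqr_ge0 // lerDl sqr_ge0.
Qed.

Lemma hnormD x y : hnorm ip (x + y) <= hnorm ip x + hnorm ip y.
Proof.
rewrite /hnorm -[X in _ <= X]ger0_norm ?addr_ge0 ?sqrtr_ge0 //.
rewrite -sqrtr_sqr ler_sqrt ?sqr_ge0 // nsqD sqrrD !sqr_sqrtr ?nsq_ge0 //.
have h := le_trans (Re_le_normc _) (CS x y); rewrite /hnorm in h.
rewrite mulr2n; lra.
Qed.

Lemma nsqZ a x : nsq (a *: x) = ComplexField.Normc.normc a ^+ 2 * nsq x.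
Proof.
rewrite ipZl ipZr (ipxx x) normc2.
by case: a => p q /=; simpc => /=; ring.
Qed.

Lemma hnormZ a x : hnorm ip (a *: x) = ComplexField.Normc.normc a * hnorm ip x.
Proof.
by rewrite /hnorm nsqZ sqrtrM ?sqr_ge0 // sqrtr_sqr ger0_norm // normc_ge0.
Qed.

Lemma hnormN x : hnorm ip (- x) = hnorm ip x.
Proof. by rewrite /hnorm ipNl ipNr opprK. Qed.

Lemma hnormB x y : hnorm ip (x - y) = hnorm ip (y - x).
Proof. by rewrite -hnormN opprB. Qed.

Lemma hnorm0 : hnorm ip 0 = 0.
Proof. by rewrite /hnorm ip0l /= sqrtr0. Qed.

Lemma ip_unique u v : (forall x, ip x u = ip x v) -> u = v.
Proof.
move=> H; apply/eqP; rewrite -subr_eq0; apply/eqP; apply: nsq_eq0.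
by rewrite ipBr H subrr.
Qed.
Lemma small_inv (e : R) : 0 < e -> exists N, forall n, (N <= n)%N -> (n.+1%:R)^-1 < e.
Proof.
move=> e0; exists (Num.bound (e^-1)) => n Hn.
have e1 : 0 < e^-1 by rewrite invr_gt0.
have h1 := archi_boundP (ltW e1).
have h2 : e^-1 < n.+1%:R.
  apply: (lt_le_trans h1); rewrite ler_nat; exact: leqW.
rewrite -(invrK e) ltf_pV2 ?posrE ?invr_gt0 //; exact: ltr0Sn.
Qed.
Lemma cR_invK (r : R) (y : R[i]) : r != 0 -> (r^-1)%:C * (y * r%:C) = y.
Proof. by move=> r0; case: y => a b; simpc => /=; apply: cplx_eq; field. Qed.

Lemma hnorm_lt x e : 0 < e -> nsq x < e ^+ 2 -> hnorm ip x < e.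
Proof.
move=> e0 h; rewrite /hnorm -(ger0_norm (ltW e0)) -sqrtr_sqr ltr_sqrt //.
by rewrite exprn_gt0.
Qed.

Lemma para x y : nsq (x - y) + nsq (x + y) = 2 * nsq x + 2 * nsq y.
Proof.
rewrite nsqD (nsqD x y) ipNr ipNl ipNr opprK.
by case: (ip x y) => a b /=; ring.
Qed.

Lemma normcR2 (r : R) : ComplexField.Normc.normc (r%:C) ^+ 2 = r ^+ 2.
Proof. by rewrite normc2 /= expr0n /= addr0. Qed.
Lemma riesz (f : V -> R[i]) (K : R) :
  ip_complete ip ->
  (forall a x y, f (a *: x + y) = a * f x + f y) ->
  (forall x, ComplexField.Normc.normc (f x) <= K * hnorm ip x) ->
  exists z, forall x, f x = ip x z.
Proof.
move=> Hc Hlin Hb.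
have f0 : f 0 = 0.
  have := Hlin 1 0 0; rewrite scaler0 addr0 mul1r => H.
  by apply: (addrI (f 0)); rewrite addr0 -H.
have fZ a x : f (a *: x) = a * f x by rewrite -[a *: x]addr0 Hlin f0 addr0.
have fD x y : f (x + y) = f x + f y by rewrite -[x]scale1r Hlin mul1r scale1r.
have fB x y : f (x - y) = f x - f y by rewrite fD -scaleN1r fZ mulN1r.
have [Hz|[x0 Hx0]] : (forall x, f x = 0) \/ exists x0, f x0 != 0.
  case: (pselect (exists x0, f x0 != 0)) => [h|h]; [by right|left => x].
  by apply/eqP; apply: contra_notT h => h; exists x.
  by exists 0 => x; rewrite Hz ip0r.
pose x1 := (f x0)^-1 *: x0.
have fx1 : f x1 = 1 by rewrite fZ mulVf.
pose S := [set r : R | exists x, f x = 1 /\ r = hnorm ip x]%classic.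
have S0 : S (hnorm ip x1) by exists x1.
have lbS : lbound S 0 by move=> r [x [_ ->]]; exact: hnorm_ge0.
have hinf : has_inf S by split; [exists (hnorm ip x1) | exists 0].
pose d := inf S.
have d0 : 0 <= d by apply: lb_le_inf; [exists (hnorm ip x1)|].
have dle x : f x = 1 -> d <= hnorm ip x.
  by move=> fx; apply: ge_inf; [exists 0 | exists x].
have Hex : forall n, exists x, f x = 1 /\ hnorm ip x < d + (n.+1%:R)^-1.
  move=> n.
  have en : 0 < (n.+1%:R : R)^-1 by rewrite invr_gt0 ltr0Sn.
  have [r [x [fx ->]] hr] := inf_adherent en hinf.
  by exists x.
have [u Hu] := boolp.choice Hex.
have mid x y : f x = 1 -> f y = 1 -> 4 * d ^+ 2 <= nsq (x + y).
  move=> fx fy.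
  have fw : f ((2^-1 : R)%:C *: (x + y)) = 1.
    by rewrite fZ fD fx fy; simpc => /=; apply: cplx_eq => /=; field.
  have := dle _ fw; rewrite /hnorm nsqZ normcR2 => h.
  have hp : 0 <= (2^-1 : R) ^+ 2 * nsq (x + y) by rewrite mulr_ge0 ?sqr_ge0 ?nsq_ge0.
  have h3 : d ^+ 2 <= (2^-1 : R) ^+ 2 * nsq (x + y).
    by rewrite -(sqr_sqrtr hp) ler_pXn2r // ?nnegrE ?sqrtr_ge0.
  move: h3; rewrite expr2 (expr2 (2^-1)); lra.
have sq_le x e : hnorm ip x < d + e -> nsq x <= (d + e)^+2.
  by move=> h; rewrite -hnorm2; have := hnorm_ge0 x; nra.
have em_pos n : 0 < (n.+1%:R : R)^-1 by rewrite invr_gt0 ltr0Sn.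
have em_le1 n : (n.+1%:R : R)^-1 <= 1 by rewrite invf_le1 ?ltr0Sn // ler1n.
have cauchy m n : nsq (u m - u n) <= (4 * d + 2) * ((m.+1%:R)^-1 + (n.+1%:R)^-1).
  have [fm hm] := Hu m; have [fn hn] := Hu n.
  have P := para (u m) (u n); have M := mid _ _ fm fn.
  have Sm := sq_le _ _ hm; have Sn := sq_le _ _ hn.
  have := em_pos m; have := em_pos n; have := em_le1 m; have := em_le1 n.
  move: P M Sm Sn.
  set a := (m.+1%:R)^-1; set b := (n.+1%:R)^-1. move=> *; nra.
have Hcau : forall e, 0 < e -> exists n0, forall m n, (n0 <= m)%N -> (n0 <= n)%N ->
    hnorm ip (u m - u n) < e.
  move=> e e0; have c0 : 0 < 4 * d + 2 by lra.
  pose q := e^+2 / (2 * (4 * d + 2)).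
  have q0 : 0 < q by rewrite divr_gt0 ?exprn_gt0 // mulr_gt0.
  have hq : 2 * (4 * d + 2) * q = e ^+ 2 by rewrite /q; field; rewrite gt_eqF.
  have [N HN] := small_inv _ q0.
  exists N => m n hm hn; apply: hnorm_lt => //.
  apply: (le_lt_trans (cauchy m n)).
  have := HN m hm; have := HN n hn; move: hq.
  set a := (m.+1%:R)^-1; set b := (n.+1%:R)^-1; move=> *; nra.
have [l Hl] := Hc u Hcau.
pose K' := `|K| + 1.
have K'0 : 0 < K' by rewrite /K'; have := normr_ge0 K; lra.
have Hb' x : ComplexField.Normc.normc (f x) <= K' * hnorm ip x.
  apply: (le_trans (Hb x)); apply: ler_wpM2r; first exact: hnorm_ge0.
  by rewrite /K'; have := ler_norm K; lra.
have fl : f l = 1.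
  have na : ComplexField.Normc.normc (f l - 1) <= 0.
    rewrite leNgt; apply/negP => a0.
    have [n0 Hn0] := Hl _ (divr_gt0 a0 K'0).
    have h := Hn0 n0 (leqnn n0).
    have := Hb' (l - u n0); rewrite fB (proj1 (Hu n0)) hnormB => h2.
    have : K' * hnorm ip (u n0 - l) <
        K' * (ComplexField.Normc.normc (f l - 1) / K') by rewrite ltr_pM2l.
    have -> : K' * (ComplexField.Normc.normc (f l - 1) / K') =
        ComplexField.Normc.normc (f l - 1) by field; rewrite gt_eqF.
    by move=> h3; have := le_lt_trans h2 h3; rewrite ltxx.
  have : ComplexField.Normc.normc (f l - 1) = 0.
    by apply/le_anti; rewrite na normc_ge0.
  by move/ComplexField.Normc.eq0_normc => /eqP; rewrite subr_eq0 => /eqP.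
have hl_le : hnorm ip l <= d.
  apply/ler_addgt0Pr => e e0.
  have e2 : 0 < e / 2 by rewrite divr_gt0.
  have [n0 Hn0] := Hl _ e2; have [N HN] := small_inv _ e2.
  pose n := maxn n0 N.
  have h1 := Hn0 n (leq_maxl _ _); have h2 := HN n (leq_maxr _ _).
  have [_ h3] := Hu n.
  rewrite -(subrK (u n) l); apply: (le_trans (hnormD _ _)); rewrite hnormB.
  move: h1 h2 h3; set a := (n.+1%:R)^-1; move=> *; lra.
have orth k : f k = 0 -> ip k l = 0.
  move=> fk; case E: (ip k l) => [p q].
  pose t := (nsq k + 1)^-1.
  have k0 := nsq_ge0 k.
  have t0 : 0 < t by rewrite invr_gt0; lra.
  have tk : t * (nsq k + 1) = 1 by rewrite mulVf // gt_eqF //; lra.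
  pose s : R[i] := (- (t * p)) +i* (t * q).
  have fs : f (l + s *: k) = 1 by rewrite fD fZ fk mulr0 addr0 fl.
  have h := le_trans hl_le (dle _ fs).
  have h2 : nsq l <= nsq (l + s *: k).
    by rewrite -!hnorm2 ler_pXn2r // ?nnegrE ?hnorm_ge0.
  move: h2; rewrite nsqD nsqZ normc2 ipZr (ipC k l) E /=.
  have tN : t * nsq k = 1 - t by move: tk; rewrite mulrDr mulr1; lra.
  have -> : ((- (t * p)) ^+ 2 + (t * q) ^+ 2) * nsq k = t * (p^+2+q^+2) * (t * nsq k) by ring.
  rewrite tN => h2.
  have h3 : 0 <= - (t * (p^+2+q^+2)) * (1 + t) by move: h2; lra.
  have h4 : 0 < t * (1 + t) by rewrite mulr_gt0 //; lra.
  have A : p^+2 + q^+2 <= 0 by move: h3 h4; set A := p^+2+q^+2; move=> *; nra.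
  have p0 : p = 0 by apply/eqP; rewrite -sqrf_eq0 eq_le sqr_ge0 andbT; nra.
  have q0 : q = 0 by apply/eqP; rewrite -sqrf_eq0 eq_le sqr_ge0 andbT; nra.
  by rewrite p0 q0.
have nl : nsq l != 0.
  apply/eqP => /nsq_eq0 l0; by move: fl; rewrite l0 f0 => /eqP; rewrite eq_sym oner_eq0.
exists (((nsq l)^-1)%:C *: l) => x.
have k0 : f (x - f x *: l) = 0 by rewrite fB fZ fl mulr1 subrr.
have := orth _ k0; rewrite ipBl ipZl (ipxx l) => /eqP; rewrite subr_eq0 => /eqP h.
by rewrite ipZr conjR h cR_invK.
Qed.
Hypothesis Hcomp : ip_complete ip.
Local Notation bnd := (bounded_op ip).

Lemma bnd_pos {T} : bnd T -> exists M, 0 <= M /\ forall x, hnorm ip (T x) <= M * hnorm ip x.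
Proof.
case=> _ [M HM]; exists `|M|; split => // x.
apply: (le_trans (HM x)); apply: ler_wpM2r; [exact: hnorm_ge0|exact: ler_norm].
Qed.

Lemma bnd_lin {T} : bnd T -> forall a x y, T (a *: x + y) = a *: T x + T y.
Proof. by case. Qed.

Lemma bnd_add S T : bnd S -> bnd T -> bnd (add_op S T).
Proof.
move=> HS HT; split.
  by move=> a x y; rewrite /add_op (bnd_lin HS) (bnd_lin HT) scalerDr addrACA.
have [M1 [_ H1]] := bnd_pos HS; have [M2 [_ H2]] := bnd_pos HT.
exists (M1 + M2) => x; rewrite /add_op mulrDl.
apply: (le_trans (hnormD _ _)); exact: lerD.
Qed.

Lemma bnd_scale c T : bnd T -> bnd (scale_op c T).
Proof.
move=> HT; split.
  by move=> a x y; rewrite /scale_op (bnd_lin HT) scalerDr !scalerA mulrC.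
have [M1 [_ H1]] := bnd_pos HT.
exists (ComplexField.Normc.normc c * M1) => x; rewrite /scale_op hnormZ -mulrA.
by apply: ler_wpM2l; [exact: normc_ge0|].
Qed.

Lemma bnd_comp S T : bnd S -> bnd T -> bnd (comp_op S T).
Proof.
move=> HS HT; split.
  by move=> a x y; rewrite /comp_op (bnd_lin HT) (bnd_lin HS).
have [M1 [M10 H1]] := bnd_pos HS; have [M2 [_ H2]] := bnd_pos HT.
exists (M1 * M2) => x; rewrite /comp_op -mulrA.
apply: (le_trans (H1 _)); exact: ler_wpM2l.
Qed.

Lemma adj_exists {T} : bnd T -> exists S : V -> V, forall x y, ip (T x) y = ip x (S y).
Proof.
move=> HT; have [M [M0 HM]] := bnd_pos HT.
have H : forall y, exists z, forall x, ip (T x) y = ip x z.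
  move=> y; apply: (riesz _ (M * hnorm ip y) Hcomp).
    by move=> a x x'; rewrite (bnd_lin HT) ipDZl.
  move=> x; apply: (le_trans (CS _ _)); rewrite mulrAC.
  by apply: ler_wpM2r; [exact: hnorm_ge0|].
have [S HS] := boolp.choice H; by exists S.
Qed.

Lemma adjP T : bnd T -> forall x y, ip (T x) y = ip x (adj ip T y).
Proof.
move=> HT; rewrite /adj.
exact: (epsilon_spec (inhabits (@zero_op R V)) (fun S : V -> V => forall x y, ip (T x) y = ip x (S y)) (adj_exists HT)).
Qed.

Lemma adj_char T S : bnd T -> (forall x y, ip (T x) y = ip x (S y)) -> adj ip T = S.
Proof.
by move=> HT H; apply: funext => y; apply: ip_unique => x; rewrite -adjP // H.
Qed.

Lemma adj_bounded T : bnd T -> bnd (adj ip T).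
Proof.
move=> HT; split.
  move=> a x y; apply: ip_unique => z.
  by rewrite -adjP // ipDr ipZr ipDr ipZr -!adjP.
have [M [M0 HM]] := bnd_pos HT.
exists M => y; set w := adj ip T y.
have h : nsq w <= M * hnorm ip w * hnorm ip y.
  have -> : nsq w = complex.Re (ip (T w) y) by rewrite adjP.
  apply: (le_trans (Re_le_normc _)); apply: (le_trans (CS _ _)).
  by apply: ler_wpM2r; [exact: hnorm_ge0|].
move: h; rewrite -hnorm2 => h.
have hw := hnorm_ge0 w; have hy := hnorm_ge0 y.
have [hw0|hw0] := boolP (0 < hnorm ip w); last first.
  have -> : hnorm ip w = 0 by apply/le_anti; rewrite hw andbT leNgt.
  exact: mulr_ge0.
by move: h; rewrite expr2 -mulrA mulrCA ler_pM2l.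
Qed.

Lemma adj_adj T : bnd T -> adj ip (adj ip T) = T.
Proof.
move=> HT; apply: adj_char; first exact: adj_bounded.
by move=> x y; rewrite ipC -adjP // -ipC.
Qed.

Lemma adj_add S T : bnd S -> bnd T -> adj ip (add_op S T) = add_op (adj ip S) (adj ip T).
Proof.
move=> HS HT; apply: adj_char; first exact: bnd_add.
by move=> x y; rewrite /add_op ipDl ipDr -!adjP.
Qed.

Lemma adj_scale c T : bnd T -> adj ip (scale_op c T) = scale_op (conjc c) (adj ip T).
Proof.
move=> HT; apply: adj_char; first exact: bnd_scale.
by move=> x y; rewrite /scale_op ipZl ipZr conjK -adjP.
Qed.

Lemma adj_comp S T : bnd S -> bnd T -> adj ip (comp_op S T) = comp_op (adj ip T) (adj ip S).
Proof.
move=> HS HT; apply: adj_char; first exact: bnd_comp.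
by move=> x y; rewrite /comp_op -!adjP.
Qed.

Lemma bnd_re T : bnd T -> bnd (re_op ip T).
Proof. by move=> HT; apply: bnd_scale; apply: bnd_add => //; exact: adj_bounded. Qed.

Lemma bnd_im T : bnd T -> bnd (im_op ip T).
Proof.
move=> HT; apply: bnd_scale; apply: bnd_add => //; apply: bnd_scale; exact: adj_bounded.
Qed.
Implicit Types (a b c d : R[i]) (X Y : V -> V).
Lemma inv_eqC (x y : R[i]) : x * y = 1 -> x^-1 = y.
Proof.
move=> h; have nz : x != 0 by apply/eqP => x0; move: h; rewrite x0 mul0r => /eqP; rewrite eq_sym oner_eq0.
by rewrite -[RHS](mulKf nz) h mulr1.
Qed.

Lemma inv2C : (2 : R[i])^-1 = (2^-1 : R)%:C.
Proof. by apply: inv_eqC; simpc => /=; apply: cplx_eq; field. Qed.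

Lemma inv2iC : (2 * 'i : R[i])^-1 = 0 +i* (- 2^-1).
Proof. by apply: inv_eqC; simpc => /=; apply: cplx_eq; field. Qed.

Lemma normcR (r : R) : 0 <= r -> ComplexField.Normc.normc (r%:C) = r.
Proof. by move=> r0; rewrite /= expr0n /= addr0 sqrtr_sqr ger0_norm. Qed.

Lemma expi_norm (t : R) : ComplexField.Normc.normc (expi t) = 1.
Proof. by rewrite /expi /= cos2Dsin2 sqrtr1. Qed.

Lemma conj_expi (t : R) : conjc (expi t) = expi (- t).
Proof. by rewrite /expi /= cosN sinN. Qed.

Lemma expi0 : expi (0 : R) = 1.
Proof. by rewrite /expi cos0 sin0. Qed.

Lemma normc_conj (z : R[i]) : ComplexField.Normc.normc (conjc z) = ComplexField.Normc.normc z.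
Proof. by case: z => a b /=; rewrite sqrrN. Qed.

Lemma polar (z : R[i]) : exists s, z = (ComplexField.Normc.normc z)%:C * expi s.
Proof.
have [->|z0] := eqVneq z 0.
  by exists 0; rewrite (ComplexField.Normc.normc0 R) mul0r.
case: z z0 => a b z0.
set r := ComplexField.Normc.normc (a +i* b).
have r0 : 0 < r.
  rewrite lt0r normc_ge0 andbT; apply/eqP => /ComplexField.Normc.eq0_normc h.
  by move: z0; rewrite h eqxx.
have r2 : r ^+ 2 = a ^+ 2 + b ^+ 2 by rewrite /r normc2.
pose x := a / r; pose y := b / r.
have xy : x ^+ 2 + y ^+ 2 = 1 by rewrite /x /y !expr_div_n -mulrDl -r2 divff // expf_neq0 // gt_eqF.
have x1 : -1 <= x <= 1.
  have hx : x ^+ 2 <= 1 by have := sqr_ge0 y; lra.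
  by apply/andP; split; nra.
have sy : Num.sqrt (1 - x ^+ 2) = `|y|.
  by rewrite -sqrtr_sqr; congr Num.sqrt; lra.
have hc : cos (acos x) = x by apply: acosK; rewrite in_itv /=.
have hs : sin (acos x) = `|y| by rewrite sin_acos.
have [y0|y0] := lerP 0 y.
  exists (acos x); rewrite /expi hc hs ger0_norm //; simpc => /=.
  by apply: cplx_eq; rewrite /x /y; field; rewrite gt_eqF.
exists (- acos x); rewrite /expi cosN sinN hc hs ltr0_norm //; simpc => /=.
by apply: cplx_eq; rewrite /x /y; field; rewrite gt_eqF.
Qed.

Definition lin2 (a : R[i]) (X : V -> V) (b : R[i]) (Y : V -> V) : V -> V :=
  fun x => a *: X x + b *: Y x.

Lemma lin2_scale c a X b Y : scale_op c (lin2 a X b Y) = lin2 (c * a) X (c * b) Y.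
Proof. by apply: funext => x; rewrite /scale_op /lin2 scalerDr !scalerA. Qed.

Lemma lin2_add a X b Y c d : add_op (lin2 a X b Y) (lin2 c X d Y) = lin2 (a + c) X (b + d) Y.
Proof. by apply: funext => x; rewrite /add_op /lin2 addrACA !scalerDl. Qed.

Lemma lin2_X a X Y : scale_op a X = lin2 a X 0 Y.
Proof. by apply: funext => x; rewrite /lin2 scale0r addr0. Qed.

Lemma lin2_Y X b Y : scale_op b Y = lin2 0 X b Y.
Proof. by apply: funext => x; rewrite /lin2 scale0r add0r. Qed.

Lemma lin2_1 X Y : X = lin2 1 X 0 Y.
Proof. by apply: funext => x; rewrite /lin2 scale0r addr0 scale1r. Qed.

Lemma lin2_eq a X b Y a' b' : a = a' -> b = b' -> lin2 a X b Y = lin2 a' X b' Y.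
Proof. by move=> -> ->. Qed.

Lemma lin2_swap a X b Y : lin2 a X b Y = lin2 b Y a X.
Proof. by apply: funext => x; rewrite /lin2 addrC. Qed.

Lemma scale_scale a b X : scale_op a (scale_op b X) = scale_op (a * b) X.
Proof. by apply: funext => x; rewrite /scale_op scalerA. Qed.

Lemma lin2_bnd a X b Y : bnd X -> bnd Y -> bnd (lin2 a X b Y).
Proof. by move=> HX HY; apply: bnd_add; apply: bnd_scale. Qed.

Lemma lin2_adj a X b Y : bnd X -> bnd Y ->
  adj ip (lin2 a X b Y) = lin2 (conjc a) (adj ip X) (conjc b) (adj ip Y).
Proof.
move=> HX HY; rewrite (_ : lin2 a X b Y = add_op (scale_op a X) (scale_op b Y)) //.
by rewrite adj_add ?adj_scale //; exact: bnd_scale.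
Qed.

Lemma re_lin2 a b X : bnd X ->
  re_op ip (lin2 a X b (adj ip X)) =
  lin2 ((2^-1 : R)%:C * (a + conjc b)) X ((2^-1 : R)%:C * (b + conjc a)) (adj ip X).
Proof.
move=> HX; rewrite /re_op lin2_adj; [|done|exact: adj_bounded].
rewrite adj_adj //.
rewrite [lin2 (conjc a) _ _ _]lin2_swap lin2_add lin2_scale inv2C.
by apply: lin2_eq; rewrite mulrC.
Qed.
Variable N : (V -> V) -> R.
Hypothesis HN : op_norm ip N.

Lemma N_ge0 T : bnd T -> 0 <= N T.
Proof. by case: HN => H _ _ _; apply: H. Qed.
Lemma N_scale c T : bnd T -> N (scale_op c T) = ComplexField.Normc.normc c * N T.
Proof. by case: HN => _ _ H _; apply: H. Qed.

Lemma bnd_Z {T} : bnd T -> forall a x, T (a *: x) = a *: T x.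
Proof.
move=> HT a x.
have T0 : T 0 = 0.
  have := bnd_lin HT 1 0 0; rewrite scaler0 addr0 scale1r => H.
  by apply: (addrI (T 0)); rewrite addr0 -H.
by rewrite -[a *: x]addr0 (bnd_lin HT) T0 addr0.
Qed.
Lemma bnd_D {T} : bnd T -> forall x y, T (x + y) = T x + T y.
Proof. by move=> HT x y; have := bnd_lin HT 1 x y; rewrite !scale1r. Qed.

Lemma re_scaleR (r : R) Y : bnd Y -> re_op ip (scale_op r%:C Y) = scale_op r%:C (re_op ip Y).
Proof.
move=> HY; apply: funext => x.
by rewrite /re_op adj_scale // conjR /scale_op /add_op -scalerDr !scalerA mulrC.
Qed.

Lemma N_reR (r : R) Y : bnd Y -> 0 <= r -> N (re_op ip (scale_op r%:C Y)) = r * N (re_op ip Y).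
Proof. by move=> HY r0; rewrite re_scaleR // N_scale ?normcR //; exact: bnd_re. Qed.

Lemma N_re_polar z X : bnd X -> exists s,
  N (re_op ip (scale_op z X)) = ComplexField.Normc.normc z * N (re_op ip (scale_op (expi s) X)).
Proof.
move=> HX; have [s Hs] := polar z; exists s.
rewrite {1}Hs -scale_scale N_reR ?normc_ge0 //; exact: bnd_scale.
Qed.

Lemma lc_lin2 a X b Y : add_op (scale_op a X) (scale_op b Y) = lin2 a X b Y.
Proof. by []. Qed.

Lemma re_adj Z : bnd Z -> re_op ip (adj ip Z) = re_op ip Z.
Proof.
by move=> HZ; rewrite /re_op adj_adj //; apply: funext => x; rewrite /scale_op /add_op addrC.
Qed.

Lemma sup_le (A B : set (\bar R)) :
  (forall p, A p -> exists2 q, B q & (p <= q)%E) -> (ereal_sup A <= ereal_sup B)%E.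
Proof.
move=> H; apply/ereal_supP => p Ap; have [q Bq pq] := H p Ap.
by apply: (le_trans pq); apply: ereal_sup_ubound.
Qed.

Lemma sup_eq (A B : set (\bar R)) : (forall p, A p -> B p) -> (forall p, B p -> A p) ->
  ereal_sup A = ereal_sup B.
Proof.
move=> H1 H2; apply/le_anti/andP; split; apply: sup_le => p Hp; exists p => //.
  exact: H1.
exact: H2.
Qed.

Lemma unit_conj (l1 l2 : R[i]) : unit_pair l1 l2 -> unit_pair (conjc l1) (conjc l2).
Proof. by rewrite /unit_pair !normc_conj. Qed.

Lemma inclD B C : bnd B -> bnd C -> forall x : \bar R,
  [set x : \bar R | exists (l1 l2 : R[i]) (t : R), unit_pair l1 l2 /\
      x = ((N (re_op ip (scale_op (expi t)
               (add_op (scale_op l1 (adj ip B)) (scale_op l2 (adj ip C))))))%:E)%E]%classic x ->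
  [set x : \bar R | exists (l1 l2 : R[i]) (t : R), unit_pair l1 l2 /\
      x = ((N (re_op ip (scale_op (expi t)
               (add_op (scale_op l1 B) (scale_op l2 C)))))%:E)%E]%classic x.
Proof.
move=> HB HC x [l1 [l2 [t [u ->]]]].
exists (conjc l1), (conjc l2), (- t); split; first exact: unit_conj.
rewrite !lc_lin2 -conj_expi.
have Hl : bnd (lin2 (conjc l1) B (conjc l2) C) by exact: lin2_bnd.
rewrite -(re_adj (scale_op (conjc (expi t)) (lin2 (conjc l1) B (conjc l2) C))); last exact: bnd_scale.
by rewrite adj_scale // lin2_adj // !conjK.
Qed.

Lemma partD B C : bnd B -> bnd C -> wNe ip N (adj ip B) (adj ip C) = wNe ip N B C.
Proof.
move=> HB HC; apply: sup_eq; first exact: inclD.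
move=> p Hp; apply: inclD; try exact: adj_bounded.
by rewrite !adj_adj.
Qed.
Lemma re_conjU U X : unitary ip U -> bnd X ->
  re_op ip (comp_op (adj ip U) (comp_op X U)) = comp_op (adj ip U) (comp_op (re_op ip X) U).
Proof.
case=> HU _ HX; have HU' : bnd (adj ip U) by exact: adj_bounded.
rewrite /re_op adj_comp //; last exact: bnd_comp.
rewrite adj_comp // adj_adj //.
apply: funext => x; rewrite /scale_op /add_op /comp_op.
by rewrite (bnd_Z HU') (bnd_D HU').
Qed.

Lemma lin2_conjU U a B b C : bnd U ->
  lin2 a (comp_op (adj ip U) (comp_op B U)) b (comp_op (adj ip U) (comp_op C U)) =
  comp_op (adj ip U) (comp_op (lin2 a B b C) U).
Proof.
move=> HU; have HU' : bnd (adj ip U) by exact: adj_bounded.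
by apply: funext => x; rewrite /lin2 /comp_op (bnd_lin HU') (bnd_Z HU').
Qed.

Lemma scale_conjU U c Y : bnd U ->
  scale_op c (comp_op (adj ip U) (comp_op Y U)) = comp_op (adj ip U) (comp_op (scale_op c Y) U).
Proof.
move=> HU; have HU' : bnd (adj ip U) by exact: adj_bounded.
by apply: funext => x; rewrite /scale_op /comp_op (bnd_Z HU').
Qed.

Lemma partE B C U : bnd B -> bnd C -> weakly_unitarily_invariant ip N -> unitary ip U ->
  wNe ip N (comp_op (adj ip U) (comp_op B U)) (comp_op (adj ip U) (comp_op C U)) = wNe ip N B C.
Proof.
move=> HB HC HW HU.
have E (l1 l2 : R[i]) (t : R) :
  N (re_op ip (scale_op (expi t) (add_op (scale_op l1 (comp_op (adj ip U) (comp_op B U)))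
        (scale_op l2 (comp_op (adj ip U) (comp_op C U)))))) =
  N (re_op ip (scale_op (expi t) (add_op (scale_op l1 B) (scale_op l2 C)))).
  have [HU1 _] := HU.
  rewrite !lc_lin2 lin2_conjU // scale_conjU // re_conjU //; last first.
    by apply: bnd_scale; exact: lin2_bnd.
  by rewrite HW //; apply: bnd_re; apply: bnd_scale; exact: lin2_bnd.
apply: sup_eq => p [l1 [l2 [t [u ->]]]]; exists l1, l2, t; split => //; by rewrite E.
Qed.

Lemma re_rot X (t : R) : bnd X -> re_op ip (scale_op (expi t) X) =
  add_op (scale_op (cos t)%:C (re_op ip X)) (scale_op (- sin t)%:C (im_op ip X)).
Proof.
move=> HX; apply: funext => x; rewrite /re_op /im_op adj_scale // /scale_op /add_op.
rewrite !scalerDr !scalerA addrACA -!scalerDl.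
congr (_ *: _ + _ *: _); rewrite inv2C inv2iC /expi; simpc => /=; apply: cplx_eq; ring.
Qed.

Lemma partF B C : bnd B -> bnd C ->
  wNe ip N B C
       = ereal_sup [set x : \bar R | exists (l1 l2 : R[i]) (a b : R),
            unit_pair l1 l2 /\ (a ^+ 2 + b ^+ 2 = 1)%R /\
            x = (N (add_op
                  (scale_op (a%:C)%C (re_op ip (add_op (scale_op l1 B) (scale_op l2 C))))
                  (scale_op (b%:C)%C (im_op ip (add_op (scale_op l1 B) (scale_op l2 C))))))%:E]%classic.
Proof.
move=> HB HC.
have Hl (l1 l2 : R[i]) : bnd (add_op (scale_op l1 B) (scale_op l2 C)) by exact: lin2_bnd.
apply: sup_eq => p.
  case=> l1 [l2 [t [u ->]]]; exists l1, l2, (cos t), (- sin t); split => //; split.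
    by rewrite sqrrN cos2Dsin2.
  by rewrite re_rot.
case=> l1 [l2 [a [b [u [hab ->]]]]].
have [s Hs] := polar (a +i* (- b)).
have n1 : ComplexField.Normc.normc (a +i* (- b)) = 1 by rewrite /= sqrrN hab sqrtr1.
move: Hs; rewrite n1 mul1r /expi => -[ha hb].
exists l1, l2, s; split => //.
by rewrite re_rot // ha -hb opprK.
Qed.
Local Notation sq := (Num.sqrt 2 : R).
Local Notation k := ((Num.sqrt 2 : R)^-1).

Lemma sq_gt0 : 0 < sq.
Proof. by rewrite sqrtr_gt0. Qed.
Lemma sq_ge0 : 0 <= sq.
Proof. exact: ltW sq_gt0. Qed.
Lemma k_ge0 : 0 <= k.
Proof. by rewrite invr_ge0 sq_ge0. Qed.
Lemma k_gt0 : 0 < k.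
Proof. by rewrite invr_gt0 sq_gt0. Qed.
Lemma sq2 : sq ^+ 2 = 2.
Proof. by rewrite sqr_sqrtr. Qed.
Lemma k2 : k ^+ 2 = 2^-1.
Proof. by rewrite exprVn sq2. Qed.
Lemma sqk : sq * k = 1.
Proof. by rewrite mulfV // gt_eqF // sq_gt0. Qed.
Lemma kk : k + k = sq.
Proof.
have nz : sq != 0 by rewrite gt_eqF // sq_gt0.
apply: (mulfI nz); rewrite mulrDr sqk -expr2 sq2; by [].
Qed.
Lemma kC2 : (k%:C * k%:C : R[i]) = (2^-1 : R)%:C.
Proof. by simpc => /=; rewrite -expr2 k2. Qed.
Lemma sqkC : (sq%:C * k%:C : R[i]) = 1.
Proof. by simpc => /=; rewrite sqk. Qed.
Lemma kkC : (k%:C + k%:C : R[i]) = sq%:C.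
Proof. by simpc => /=; rewrite kk. Qed.

Lemma N1 (l1 l2 : R[i]) :
  ComplexField.Normc.normc (k%:C * (l1 + l2)) ^+ 2 + ComplexField.Normc.normc (k%:C * (l1 - l2)) ^+ 2
  = ComplexField.Normc.normc l1 ^+ 2 + ComplexField.Normc.normc l2 ^+ 2.
Proof.
rewrite !normc2; case: l1 => a1 b1; case: l2 => a2 b2; simpc => /=.
transitivity (2 * k ^+ 2 * (a1 ^+ 2 + b1 ^+ 2 + (a2 ^+ 2 + b2 ^+ 2))); first by ring.
by rewrite k2; field.
Qed.

Lemma N2 (l1 l2 : R[i]) :
  ComplexField.Normc.normc (k%:C * (l1 - 'i * l2)) ^+ 2 + ComplexField.Normc.normc (k%:C * (l1 + 'i * l2)) ^+ 2
  = ComplexField.Normc.normc l1 ^+ 2 + ComplexField.Normc.normc l2 ^+ 2.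
Proof.
rewrite !normc2; case: l1 => a1 b1; case: l2 => a2 b2; simpc => /=.
transitivity (2 * k ^+ 2 * (a1 ^+ 2 + b1 ^+ 2 + (a2 ^+ 2 + b2 ^+ 2))); first by ring.
by rewrite k2; field.
Qed.

Lemma N3 (l1 l2 : R[i]) :
  ComplexField.Normc.normc (k%:C * (l1 + l2)) ^+ 2 + ComplexField.Normc.normc ('i * (k%:C * (l1 - l2))) ^+ 2
  = ComplexField.Normc.normc l1 ^+ 2 + ComplexField.Normc.normc l2 ^+ 2.
Proof.
rewrite !normc2; case: l1 => a1 b1; case: l2 => a2 b2; simpc => /=.
transitivity (2 * k ^+ 2 * (a1 ^+ 2 + b1 ^+ 2 + (a2 ^+ 2 + b2 ^+ 2))); first by ring.
by rewrite k2; field.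
Qed.

Lemma unit_of {l1 l2 m1 m2 : R[i]} :
  ComplexField.Normc.normc m1 ^+ 2 + ComplexField.Normc.normc m2 ^+ 2
  = ComplexField.Normc.normc l1 ^+ 2 + ComplexField.Normc.normc l2 ^+ 2 ->
  unit_pair l1 l2 -> unit_pair m1 m2.
Proof. by rewrite /unit_pair => ->. Qed.

Lemma sum_le_sq (x y : R) : 0 <= x -> 0 <= y -> x ^+ 2 + y ^+ 2 <= 1 -> x + y <= sq.
Proof.
move=> x0 y0 h; rewrite -(ler_pXn2r (isT : (0 < 2)%N)) ?nnegrE ?addr_ge0 ?sqrtr_ge0 //.
by rewrite sq2; have := sqr_ge0 (x - y); nra.
Qed.
Lemma re_lin2_scale a b X : bnd X ->
  re_op ip (lin2 a X b (adj ip X)) = re_op ip (scale_op (a + conjc b) X).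
Proof.
move=> HX; rewrite (lin2_X _ X (adj ip X)) !re_lin2 //; apply: lin2_eq.
  by rewrite conjc0 addr0.
by rewrite conjD conjK add0r addrC.
Qed.

Lemma bndE X : bnd X -> forall (e a b : R[i]), bnd (scale_op e (lin2 a X b (adj ip X))).
Proof. by move=> HX e a b; apply: bnd_scale; apply: lin2_bnd => //; exact: adj_bounded. Qed.

Lemma partC B : bnd B -> wNe ip N B B = (sq%:E * wN ip N B)%E.
Proof.
move=> HB; rewrite /wN -ereal_sup_pZl ?sq_gt0 //; rewrite /wNe.
have E (l1 l2 : R[i]) : add_op (scale_op l1 B) (scale_op l2 B) = scale_op (l1 + l2) B.
  by apply: funext => x; rewrite /add_op /scale_op scalerDl.
apply/le_anti/andP; split; apply: sup_le => p.
- case=> l1 [l2 [t [u ->]]].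
  rewrite E scale_scale.
  have [s Hs] := N_re_polar (expi t * (l1 + l2)) B HB.
  exists (sq%:E * (N (re_op ip (scale_op (expi s) B)))%:E)%E.
    by exists (N (re_op ip (scale_op (expi s) B)))%:E => //; exists s.
  rewrite Hs -EFinM lee_fin ler_wpM2r //.
    by apply: N_ge0; apply: bnd_re; apply: bnd_scale.
  rewrite ComplexField.Normc.normcM expi_norm mul1r.
  apply: (le_trans (le_normcD l1 l2)); apply: sum_le_sq; [exact: normc_ge0|exact: normc_ge0|exact: u].
- case=> x [s _ <-] <-.
  exists (N (re_op ip (scale_op (expi s) (add_op (scale_op k%:C B) (scale_op k%:C B)))))%:E.
    exists k%:C, k%:C, s; split => //.
    rewrite /unit_pair normcR; last exact: ltW k_gt0.
    by rewrite k2; lra.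
  rewrite E kkC scale_scale mulrC -scale_scale N_reR ?sq_ge0 //; last exact: bnd_scale.
Qed.

Lemma partB2' B : bnd B -> wNe ip N B (adj ip B) = (sq%:E * wN ip N B)%E.
Proof.
move=> HB; rewrite /wN -ereal_sup_pZl ?sq_gt0 //; rewrite /wNe.
apply/le_anti/andP; split; apply: sup_le => p.
- case=> l1 [l2 [t [u ->]]].
  rewrite lc_lin2 lin2_scale re_lin2_scale //.
  have [s Hs] := N_re_polar (expi t * l1 + conjc (expi t * l2)) B HB.
  exists (sq%:E * (N (re_op ip (scale_op (expi s) B)))%:E)%E.
    by exists (N (re_op ip (scale_op (expi s) B)))%:E => //; exists s.
  rewrite Hs -EFinM lee_fin ler_wpM2r //.
    by apply: N_ge0; apply: bnd_re; apply: bnd_scale.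
  apply: (le_trans (le_normcD _ _)).
  rewrite normc_conj !ComplexField.Normc.normcM expi_norm !mul1r.
  apply: sum_le_sq; [exact: normc_ge0|exact: normc_ge0|exact: u].
- case=> x [s _ <-] <-.
  exists (N (re_op ip (scale_op (expi 0) (add_op (scale_op (k%:C * expi s) B)
             (scale_op (k%:C * expi (- s)) (adj ip B))))))%:E.
    exists (k%:C * expi s), (k%:C * expi (- s)), 0; split => //.
    rewrite /unit_pair !ComplexField.Normc.normcM !expi_norm !mulr1 normcR; last exact: ltW k_gt0.
    by rewrite k2; lra.
  rewrite lc_lin2 lin2_scale re_lin2_scale // expi0 !mul1r.
  rewrite conjM conjR conj_expi opprK -mulrDl kkC -scale_scale N_reR ?sq_ge0 //; last exact: bnd_scale.
Qed.

Lemma partB2 B : bnd B -> (k%:E * wNe ip N B (adj ip B))%E = wN ip N B.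
Proof.
by move=> HB; rewrite partB2' // muleA -EFinM mulVf ?gt_eqF ?sq_gt0 // mul1e.
Qed.
Lemma lc_reim (l1 l2 : R[i]) B : bnd B ->
  add_op (scale_op l1 (re_op ip B)) (scale_op l2 (im_op ip B)) =
  lin2 ((2^-1 : R)%:C * (l1 - 'i * l2)) B ((2^-1 : R)%:C * (l1 + 'i * l2)) (adj ip B).
Proof.
move=> HB; apply: funext => x.
rewrite /re_op /im_op /add_op /scale_op /lin2 !scalerDr !scalerA addrACA -!scalerDl.
congr (_ *: _ + _ *: _); rewrite inv2C inv2iC;
  case: l1 => a1 b1; case: l2 => a2 b2; simpc => /=; apply: cplx_eq; ring.
Qed.

Lemma partB1 B : bnd B ->
  wNe ip N (re_op ip B) (im_op ip B) = (k%:E * wNe ip N B (adj ip B))%E.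
Proof.
move=> HB; rewrite /wNe -ereal_sup_pZl ?k_gt0 //.
have HB' : bnd (adj ip B) by exact: adj_bounded.
apply/le_anti/andP; split; apply: sup_le => p.
- case=> l1 [l2 [t [u ->]]].
  rewrite lc_reim //.
  pose n1 := k%:C * (l1 - 'i * l2); pose n2 := k%:C * (l1 + 'i * l2).
  have E : lin2 ((2^-1 : R)%:C * (l1 - 'i * l2)) B ((2^-1 : R)%:C * (l1 + 'i * l2)) (adj ip B)
      = scale_op k%:C (lin2 n1 B n2 (adj ip B)).
    by rewrite lin2_scale; apply: lin2_eq; rewrite /n1 /n2 mulrA kC2.
  exists (k%:E * (N (re_op ip (scale_op (expi t) (lin2 n1 B n2 (adj ip B)))))%:E)%E.
    exists (N (re_op ip (scale_op (expi t) (lin2 n1 B n2 (adj ip B)))))%:E => //.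
    exists n1, n2, t; split => //. exact: (unit_of (N2 l1 l2) u).
  rewrite E scale_scale mulrC -scale_scale N_reR ?k_ge0 //; last exact: bndE.

- case=> x [n1 [n2 [t [u ->]]]] <-.
  exists (N (re_op ip (scale_op (expi t) (add_op (scale_op (k%:C * (n1 + n2)) (re_op ip B))
            (scale_op ('i * (k%:C * (n1 - n2))) (im_op ip B))))))%:E.
    by exists (k%:C * (n1 + n2)), ('i * (k%:C * (n1 - n2))), t; split => //;
      apply: (unit_of (N3 n1 n2)).
  rewrite lc_reim //.
  have E : lin2 ((2^-1 : R)%:C * (k%:C * (n1 + n2) - 'i * ('i * (k%:C * (n1 - n2))))) B
              ((2^-1 : R)%:C * (k%:C * (n1 + n2) + 'i * ('i * (k%:C * (n1 - n2))))) (adj ip B)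
      = scale_op k%:C (lin2 n1 B n2 (adj ip B)).
    rewrite lin2_scale; apply: lin2_eq;
      case: n1 {u} => a1 b1; case: n2 => a2 b2; simpc => /=; apply: cplx_eq; field; rewrite gt_eqF ?sq_gt0 //.
  rewrite E scale_scale mulrC -scale_scale N_reR ?k_ge0 //; last exact: bndE.
Qed.

Lemma lc_pm (m1 m2 : R[i]) B C :
  add_op (scale_op m1 (add_op B C)) (scale_op m2 (add_op B (scale_op (-1)%R C))) =
  lin2 (m1 + m2) B (m1 - m2) C.
Proof.
apply: funext => x.
rewrite /add_op /scale_op /lin2 !scalerDr !scalerA addrACA -!scalerDl.
by rewrite mulrN1.
Qed.

Lemma partA B C : bnd B -> bnd C ->
  wNe ip N B C = (k%:E * wNe ip N (add_op B C) (add_op B (scale_op (-1)%R C)))%E.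
Proof.
move=> HB HC; rewrite /wNe -ereal_sup_pZl ?k_gt0 //.
have Hl (l1 l2 : R[i]) : bnd (lin2 l1 B l2 C) by exact: lin2_bnd.
have kq : k * sq = 1 by rewrite mulVf // gt_eqF // sq_gt0.
apply/le_anti/andP; split; apply: sup_le => p.
- case=> l1 [l2 [t [u ->]]].
  pose m1 := k%:C * (l1 + l2); pose m2 := k%:C * (l1 - l2).
  exists (k%:E * (N (re_op ip (scale_op (expi t) (add_op (scale_op m1 (add_op B C))
            (scale_op m2 (add_op B (scale_op (-1)%R C)))))))%:E)%E.
    exists (N (re_op ip (scale_op (expi t) (add_op (scale_op m1 (add_op B C))
            (scale_op m2 (add_op B (scale_op (-1)%R C)))))))%:E => //.
    by exists m1, m2, t; split => //; apply: (unit_of (N1 l1 l2)).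
  have E : lin2 (m1 + m2) B (m1 - m2) C = scale_op sq%:C (lin2 l1 B l2 C).
    by rewrite lin2_scale /m1 /m2; apply: lin2_eq; rewrite -kkC; ring.
  rewrite lc_pm E scale_scale mulrC -scale_scale N_reR ?sq_ge0 //; last exact: bnd_scale.
  by rewrite -EFinM mulrA kq mul1r.
- case=> x [m1 [m2 [t [u ->]]]] <-.
  pose l1 := k%:C * (m1 + m2); pose l2 := k%:C * (m1 - m2).
  exists (N (re_op ip (scale_op (expi t) (add_op (scale_op l1 B) (scale_op l2 C)))))%:E.
    by exists l1, l2, t; split => //; apply: (unit_of (N1 m1 m2)).
  have E : lin2 (m1 + m2) B (m1 - m2) C = scale_op sq%:C (lin2 l1 B l2 C).
    by rewrite lin2_scale /l1 /l2; apply: lin2_eq; rewrite mulrA sqkC mul1r.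
  rewrite lc_pm E scale_scale mulrC -scale_scale N_reR ?sq_ge0 //; last exact: bnd_scale.
  by rewrite -EFinM mulrA kq mul1r.
Qed.
End Basics.

Local Close Scope complex_scope.

Theorem proposition2p3 (R : realType) (V : lmodType R[i]) (ip : V -> V -> R[i])
    (N : (V -> V) -> R) (B C : V -> V) :
  hilbert ip -> op_norm ip N -> bounded_op ip B -> bounded_op ip C ->
  (* (a) *)
  wNe ip N B C
    = (((Num.sqrt 2 : R)^-1)%:E * wNe ip N (add_op B C) (add_op B (scale_op (-1)%R C)))%E
  (* (b) *)
  /\ wNe ip N (re_op ip B) (im_op ip B)
       = (((Num.sqrt 2 : R)^-1)%:E * wNe ip N B (adj ip B))%E
  /\ (((Num.sqrt 2 : R)^-1)%:E * wNe ip N B (adj ip B))%E = wN ip N B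
  (* (c) *)
  /\ wNe ip N B B = ((Num.sqrt 2 : R)%:E * wN ip N B)%E
  (* (d) *)
  /\ wNe ip N (adj ip B) (adj ip C) = wNe ip N B C
  (* (e) *)
  /\ (weakly_unitarily_invariant ip N ->
      forall U, unitary ip U ->
        wNe ip N (comp_op (adj ip U) (comp_op B U)) (comp_op (adj ip U) (comp_op C U))
          = wNe ip N B C)
  (* (f) *)
  /\ wNe ip N B C
       = ereal_sup [set x : \bar R | exists (l1 l2 : R[i]) (a b : R),
            unit_pair l1 l2 /\ (a ^+ 2 + b ^+ 2 = 1)%R /\
            x = (N (add_op
                  (scale_op (a%:C)%C (re_op ip (add_op (scale_op l1 B) (scale_op l2 C))))
                  (scale_op (b%:C)%C (im_op ip (add_op (scale_op l1 B) (scale_op l2 C))))))%:E].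
Proof.
move=> [Hip Hcomp] HN HB HC.
split; first by apply: partA.
split; first by apply: partB1.
split; first by apply: partB2.
split; first by apply: partC.
split; first by apply: partD.
split; first by move=> HW U HU; apply: partE.
by apply: partF.
Qed.
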